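(* Let $A\in\mathbb C^{n\times n}$, $b\in\mathbb C^n$, and let $M, F\in\mathbb C^{n\times n}$ be nonsingular. Partition the index set $\{1,\dots,n\}$ into $m$ consecutive blocks, and write accordingly $x = (x^{(1)},\dots,x^{(m)})$, $b=(b^{(1)},\dots,b^{(m)})$, and $A = (A^{(s,q)})_{s,q=1}^m$ in block form; assume $M$ and $F$ are block diagonal with respect to this partition, with nonsingular diagonal blocks $M^{(1)},\dots,M^{(m)}$ and $F^{(1)},\dots,F^{(m)}$. Consider any sequence of subsets $\Omega_k\subseteq\{1,\dots,m\}$, $k\in\mathbb N$, such that each $s\in\{1,\dots,m\}$ belongs to $\Omega_k$ for infinitely many $k$, and any functions $\delta_s(q,k)\in\mathbb N$ ($s,q\in\{1,\dots,m\}$, $k\in\mathbb N$) with $\delta_s(q,k)\le k$ and $\lim_{k\to\infty}\delta_s(q,k)=\infty$ for all $s,q$. Given an arbitrary initial vector $x^0$, define the asynchronous alternating iteration: for each $k\in\mathbb N$ and all $s\in\{1,\dots,m\}$, \[ y^{(s),k} := x^{(s),\delta_s(s,k)} + {M^{(s)}}^{-1}\Big(b^{(s)} - \sum_{q=1}^m A^{(s,q)} x^{(q),\delta_s(q,k)}\Big), \] \[ x^{(s),k+1} := \begin{cases} y^{(s),\delta_s(s,k)} + {F^{(s)}}^{-1}\Big(b^{(s)} - \displaystyle\sum_{q=1}^m A^{(s,q)} y^{(q),\delta_s(q,k)}\Big) & \text{if } s\in\Omega_k,\\[1ex] x^{(s),k} & \text{if } s\notin\Omega_k.\end{cases} \]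 If $A$ is an $\mathsf H$-matrix and \[ \langle M\rangle - |M - A| = \langle A\rangle, \qquad \langle F\rangle - |F - A| = \langle A\rangle, \] then for every initial guess $x^0$, every such sequence $\{\Omega_k\}$ and every such delay functions $\delta_1,\dots,\delta_m$, the sequence $x^k$ converges to the solution of $Ax=b$.
   Context: For a matrix $\mathcal A$, $|\mathcal A|$ denotes the entrywise absolute value (modulus) and $\rho(\mathcal A)$ its spectral radius. Comparisons between matrices are entrywise. A square real matrix $\mathcal A$ is an $\mathsf M$-matrix if there exists $\alpha\in\mathbb R$ with $\alpha I - \mathcal A \ge 0$ (entrywise) and $\alpha > \rho(\alpha I - \mathcal A)$. The comparison matrix $\langle \mathcal A\rangle$ of a square matrix $\mathcal A$ is defined by $\langle \mathcal A\rangle_{i,i} := |\mathcal A_{i,i}|$ and $\langle \mathcal A\rangle_{i,j} := -|\mathcal A_{i,j}|$ for $i\ne j$. A square matrix $\mathcal A$ is an $\mathsf H$-matrix if its comparison matrix $\langle\mathcal A\rangle$ is an $\mathsf M$-matrix. *)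

(* Defs.v *)
From HB Require Import structures.
From mathcomp Require Import all_boot all_order all_algebra complex reals.
Set Implicit Arguments. Unset Strict Implicit. Unset Printing Implicit Defensive.
Import Order.TTheory GRing.Theory Num.Theory.
Local Open Scope ring_scope.

Section MatrixNotions.
Variable C : numClosedFieldType.

Definition mabs (m n : nat) (A : 'M[C]_(m, n)) : 'M[C]_(m, n) := map_mx Num.norm A.

Definition cmp_mx (n : nat) (A : 'M[C]_n) : 'M[C]_n :=
  \matrix_(i, j) (if i == j then `|A i i| else - `|A i j|).

Definition spec_rad (n : nat) (A : 'M[C]_n) : C :=
  \big[Num.max/0]_(z <- sval (closed_field_poly_normal (char_poly A))) `|z|.

Definition mx_nonneg (m n : nat) (A : 'M[C]_(m, n)) : Prop := forall i j, 0 <= A i j.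

Definition is_Mmatrix (n : nat) (A : 'M[C]_n) : Prop :=
  (forall i j, A i j \is Num.real) /\
  exists alpha : C, alpha \is Num.real /\
    mx_nonneg (alpha%:M - A) /\ spec_rad (alpha%:M - A) < alpha.

Definition is_Hmatrix (n : nat) (A : 'M[C]_n) : Prop := is_Mmatrix (cmp_mx A).

End MatrixNotions.

Section Blocks.
(* A partition of {0..n-1} into m blocks is given by blk : 'I_n -> 'I_m
   (i lies in block blk i). *)
Variables (C : numClosedFieldType) (n m : nat) (blk : 'I_n -> 'I_m).

Definition consecutive_blocks : Prop :=
  (forall i j : 'I_n, (i <= j)%N -> (blk i <= blk j)%N) /\
  (forall s : 'I_m, exists i, blk i = s).

Definition blkset (s : 'I_m) : {set 'I_n} := [set i | blk i == s].

(* the a-th index (in increasing order) of block s *)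
Definition bidx (s : 'I_m) (a : 'I_#|blkset s|) : 'I_n := enum_val a.

Definition subblock (A : 'M[C]_n) (s q : 'I_m) : 'M[C]_(#|blkset s|, #|blkset q|) :=
  \matrix_(a, c) A (bidx a) (bidx c).

Definition bvec (x : 'cV[C]_n) (s : 'I_m) : 'cV[C]_(#|blkset s|) :=
  \col_a x (bidx a) 0.

Definition block_diagonal (M : 'M[C]_n) : Prop :=
  forall i j, blk i != blk j -> M i j = 0.

End Blocks.

(* Main.v *)
Require Import Defs.
From HB Require Import structures.
From mathcomp Require Import all_boot all_order all_algebra complex reals.
From mathcomp Require Import fingroup perm ring lra.
Require Import Defs.
Import Order.TTheory GRing.Theory Num.Theory.
Set Implicit Arguments. Unset Strict Implicit. Unset Printing Implicit Defensive.
Local Open Scope ring_scope.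

Section Phase1.
Variable R : realType.

Lemma ex_argmin {I : finType} (i0 : I) (f : I -> R) : exists i, forall j, f i <= f j.
Proof.
case: (@arg_minP _ _ I i0 predT f isT) => i _ H; exists i => j; exact: H.
Qed.

Lemma ex_argmax {I : finType} (i0 : I) (f : I -> R) : exists i, forall j, f j <= f i.
Proof.
case: (@arg_maxP _ _ I i0 predT f isT) => i _ H; exists i => j; exact: H.
Qed.

Lemma minP n (Z : 'M[R]_n) (v : 'cV[R]_n) :
  (forall i j, i != j -> Z i j <= 0) -> (forall i, 0 < \sum_j Z i j) ->
  (forall i, 0 <= (Z *m v) i 0) -> forall i, 0 <= v i 0.
Proof.
move=> Zoff Zrow Zv i.
have [i0 Hi0] := ex_argmin i (fun j => v j 0).
rewrite leNgt; apply/negP => vneg.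
have v0neg : v i0 0 < 0 by apply: le_lt_trans (Hi0 i) vneg.
have := Zv i0; rewrite mxE.
have : \sum_j Z i0 j * v j 0 <= (\sum_j Z i0 j) * v i0 0.
  rewrite mulr_suml; apply: ler_sum => j _.
  case: (eqVneq j i0) => [->|ne]; first by [].
  by apply: ler_wnM2l; [apply: Zoff; rewrite eq_sym| apply: Hi0].
move=> H1 H2.
have : (\sum_j Z i0 j) * v i0 0 < 0 by rewrite pmulr_rlt0 // Zrow.
by rewrite ltNge (le_trans H2 H1).
Qed.

Lemma det_bound m (X : 'M[R]_m) c : 0 <= c -> (forall i j, `|X i j| <= c) ->
  `|\det X| <= #|{perm 'I_m}|%:R * c ^+ m.
Proof.
move=> c0 Xc; rewrite /determinant.
apply: (le_trans (ler_norm_sum _ _ _)).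
have -> : #|{perm 'I_m}|%:R * c ^+ m = \sum_(s : {perm 'I_m}) c ^+ m.
  by rewrite sumr_const mulr_natl.
apply: ler_sum => s _; rewrite normrM normr_sign mul1r normr_prod.
rewrite -[in X in _ <= X](card_ord m) -prodr_const; apply: ler_prod => i _.
by rewrite normr_ge0 Xc.
Qed.

Lemma base_mono n (Z : 'M[R]_n) (t : R) (v : 'cV[R]_n) :
  (forall i j, i != j -> Z i j <= 0) -> 1 + \sum_i \sum_j `|Z i j| <= t ->
  (forall i, 0 <= ((t%:M + Z) *m v) i 0) -> forall i, 0 <= v i 0.
Proof.
move=> Zoff Ht; apply: minP.
  by move=> i j ij; rewrite !mxE (negbTE ij) mulr0n add0r Zoff.
move=> i; rewrite (bigD1 i) //= !mxE eqxx mulr1n.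
have H1 : \sum_(j | j != i) (t%:M + Z) i j = \sum_(j | j != i) Z i j.
  by apply: eq_bigr => j ji; rewrite !mxE eq_sym (negbTE ji) mulr0n add0r.
rewrite H1 -addrA.
have H2 : - (\sum_j `|Z i j|) <= Z i i + \sum_(j | j != i) Z i j.
  rewrite (bigD1 i) //= opprD.
  apply: lerD; first by rewrite lerNl ler_normr lexx orbT.
  rewrite -sumrN; apply: ler_sum => j _; by rewrite lerNl ler_normr lexx orbT.
have H3 : \sum_j `|Z i j| <= \sum_i \sum_j `|Z i j|.
  rewrite [X in _ <= X](bigD1 i) //= lerDl; apply: sumr_ge0 => k _; apply: sumr_ge0 => j _; exact: normr_ge0.
apply: (lt_le_trans _ (lerD (lexx t) H2)).
rewrite subr_gt0; apply: lt_le_trans Ht; apply: (le_lt_trans H3); by rewrite ltrDr ltr01.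
Qed.

Definition mono {n} (X : 'M[R]_n) :=
  forall v : 'cV[R]_n, (forall i, 0 <= (X *m v) i 0) -> forall i, 0 <= v i 0.

Lemma mulmx_delta_entry n (N : 'M[R]_n) i j : (N *m (delta_mx j 0 : 'cV[R]_n)) i 0 = N i j.
Proof.
rewrite mxE (bigD1 j) //= big1 ?addr0; first by rewrite mxE !eqxx mulr1.
by move=> k kj; rewrite mxE (negbTE kj) mulr0.
Qed.

Lemma mono_inv_ge0 n (X : 'M[R]_n) : X \in unitmx -> mono X -> forall i j, 0 <= invmx X i j.
Proof.
move=> Xu Xm i j; rewrite -mulmx_delta_entry; apply: Xm => k.
by rewrite mulmxA mulmxV // mul1mx mxE; case: (_ && _).
Qed.

Lemma step_mono n (Y : 'M[R]_n) (h K : R) : Y \in unitmx -> mono Y ->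
  (forall i j, invmx Y i j <= K) -> 0 < h -> h * (K *+ n) < 1 -> mono (Y - h%:M).
Proof.
move=> Yu Ym YK h0 hK v Hv.
set N := invmx Y.
have N0 := mono_inv_ge0 Yu Ym.
have E : (1%:M - h *: N) *m v = N *m ((Y - h%:M) *m v).
  rewrite mulmxBl mul1mx -scalemxAl mulmxBl mulmxBr mulmxA mulVmx // mul1mx.
  by rewrite mul_scalar_mx -scalemxAr.
apply: (minP (Z := 1%:M - h *: N)).
- move=> i j ij; rewrite !mxE (negbTE ij) mulr0n sub0r oppr_le0.
  by apply: mulr_ge0; [exact: ltW|exact: N0].
- move=> i.
  have -> : \sum_j (1%:M - h *: N : 'M[R]_n) i j = 1 - h * \sum_j N i j.
    rewrite (eq_bigr (fun j => (i == j)%:R - h * N i j)); last by move=> j _; rewrite !mxE.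
    rewrite sumrB -mulr_sumr; congr (_ - _).
    rewrite (bigD1 i) //= eqxx big1 ?addr0 // => j ji.
    by rewrite eq_sym (negbTE ji).
  rewrite subr_gt0; apply: le_lt_trans hK; apply: ler_wpM2l; first exact: ltW.
  rewrite -[in X in _ <= X](card_ord n) -sumr_const; apply: ler_sum => j _; exact: YK.
- move=> i; rewrite E mxE; apply: sumr_ge0 => j _; apply: mulr_ge0; [exact: N0|exact: Hv].
Qed.

Lemma inv_bound n (Y : 'M[R]_n) (c c1 : R) : 0 < c -> c <= `|\det Y| -> 0 <= c1 ->
  (forall i j, `|Y i j| <= c1) ->
  forall i j, invmx Y i j <= (#|{perm 'I_n.-1}|%:R * c1 ^+ n.-1) / c.
Proof.
move=> c0 cY c10 Yc i j.
have Yu : Y \in unitmx.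
  by rewrite unitmxE unitfE -normr_gt0 (lt_le_trans c0 cY).
rewrite /invmx Yu mxE; apply: (le_trans (ler_norm _)).
rewrite normrM normfV mulrC /adjugate mxE /cofactor normrM normr_sign mul1r.
apply: ler_pM.
- exact: normr_ge0.
- by rewrite invr_ge0 normr_ge0.
- apply: det_bound => // a b; rewrite !mxE; exact: Yc.
- rewrite lef_pV2 ?posrE //; exact: lt_le_trans cY.
Qed.

Lemma entry_le_sum n (G : 'M[R]_n) i j : `|G i j| <= \sum_i \sum_j `|G i j|.
Proof.
have H : forall (I : finType) (F : I -> R) k, (forall l, 0 <= F l) -> F k <= \sum_l F l.
  move=> I F k F0; rewrite (bigD1 k) //= lerDl; exact: sumr_ge0.
apply: le_trans (H _ _ i _); last by move=> l; apply: sumr_ge0 => *; exact: normr_ge0.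
by apply: H => l; exact: normr_ge0.
Qed.

Lemma Zpos n (G : 'M[R]_n) (c : R) : 0 < c -> (forall i j, i != j -> G i j <= 0) ->
  (forall t, 0 <= t -> c <= `|\det (t%:M + G)|) ->
  exists u : 'cV[R]_n, (forall i, 0 < u i 0) /\ G *m u = (const_mx 1 : 'cV[R]_n).
Proof.
move=> c0 Goff Gdet.
set S := \sum_i \sum_j `|G i j|.
have S0 : 0 <= S by apply: sumr_ge0 => *; apply: sumr_ge0 => *; exact: normr_ge0.
set T0 := 1 + S.
set c1 := T0 + 1 + S.
have c10 : 0 <= c1 by rewrite /c1 /T0; apply: addr_ge0 => //; apply: addr_ge0 => //; apply: addr_ge0.
set K := (#|{perm 'I_n.-1}|%:R * c1 ^+ n.-1) / c.
have K0 : 0 <= K by apply: divr_ge0; [apply: mulr_ge0 => //; exact: exprn_ge0|exact: ltW].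
set h := (K *+ n + 1)^-1.
have Kn0 : 0 < K *+ n + 1 by apply: ltr_wpDl; [exact: mulrn_wge0|exact: ltr01].
have h0 : 0 < h by rewrite invr_gt0.
have h1 : h <= 1 by rewrite invf_le1 // lerDr mulrn_wge0.
have hK : h * (K *+ n) < 1.
  by rewrite mulrC -(ltr_pM2r Kn0) -mulrA mulVf ?gt_eqF // mulr1 mul1r ltrDl ltr01.
have Hunit : forall t, 0 <= t -> (t%:M + G) \in unitmx.
  by move=> t t0; rewrite unitmxE unitfE -normr_gt0 (lt_le_trans c0 (Gdet t t0)).
have claim : forall k : nat, forall t, 0 <= t -> T0 - k%:R * h <= t -> mono (t%:M + G).
  elim=> [|k IH] t t0 Ht.
    move=> v Hv; apply: (base_mono (Z := G) (t := t)) => //.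
    by move: Ht; rewrite mul0r subr0.
  case: (lerP (T0 - k%:R * h) t) => Hk; first exact: IH.
  have t'0 : 0 <= t + h by apply: addr_ge0 => //; exact: ltW.
  have Ht' : T0 - k%:R * h <= t + h.
    by move: Ht; rewrite -natr1 mulrDl mul1r opprD addrA lerBlDr.
  have Ym := IH _ t'0 Ht'.
  have tle : t + h <= T0 + 1.
    apply: lerD => //; apply: (le_trans (ltW Hk)); rewrite lerBlDr lerDl.
    by apply: mulr_ge0 => //; exact: ltW.
  have YK : forall i j, invmx ((t + h)%:M + G) i j <= K.
    apply: inv_bound => //; first exact: Gdet.
    move=> i j; rewrite mxE mxE; apply: (le_trans (ler_normD _ _)).
    rewrite /c1; apply: lerD; last exact: entry_le_sum.
    case: (i == j); last by rewrite mulr0n normr0; apply: addr_ge0 => //; apply: addr_ge0 => //; exact: ler01.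
    by rewrite mulr1n ger0_norm.
  have := step_mono (Hunit _ t'0) Ym YK h0 hK.
  by rewrite raddfD /= addrAC addrK.
have [k Hk] : exists k : nat, T0 - k%:R * h <= 0.
  exists (Num.Def.archi_bound (T0 / h)); rewrite subr_le0.
  have := archi_boundP (x := T0 / h) (divr_ge0 (addr_ge0 ler01 S0) (ltW h0)).
  by rewrite ltr_pdivrMr // => /ltW.
have Gm := claim k 0 (lexx 0) Hk.
have Gu := Hunit 0 (lexx 0).
rewrite raddf0 add0r in Gm Gu.
exists (invmx G *m (const_mx 1 : 'cV[R]_n)); split; last by rewrite mulmxA mulmxV // mul1mx.
have u0 : forall i, 0 <= (invmx G *m (const_mx 1 : 'cV[R]_n)) i 0.
  by apply: Gm => i; rewrite mulmxA mulmxV // mul1mx mxE ler01.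
move=> i; rewrite lt_def u0 andbT; apply/negP => /eqP ui0.
have : (G *m (invmx G *m (const_mx 1 : 'cV[R]_n))) i 0 <= 0.
  rewrite mxE (bigD1 i) //= ui0 mulr0 add0r; apply: sumr_le0 => j ji.
  by apply: mulr_le0_ge0; [apply: Goff; rewrite eq_sym|exact: u0].
by rewrite mulmxA mulmxV // mul1mx mxE leNgt ltr01.
Qed.

End Phase1.

Section Transfer.
Variable R : realType.
Local Notation C := (R[i]).
Local Open Scope complex_scope.

Definition nrm (z : C) : R := complex.Re `|z|.

Lemma normcE' (z : C) : `|z| = (nrm z)%:C.
Proof. by rewrite /nrm RRe_real // normr_real. Qed.

Lemma nrm_ge0 (z : C) : 0 <= nrm z.
Proof. by rewrite -ler0c -normcE' normr_ge0. Qed.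

Lemma normC_real (r : R) : `|r%:C| = `|r|%:C.
Proof. by rewrite normc_def /= expr0n /= addr0 sqrtr_sqr. Qed.

Lemma nrm_real (r : R) : nrm (r%:C) = `|r|.
Proof. by apply: complexI; rewrite -normcE' normC_real. Qed.

Lemma nrm_sum (I : finType) (P : pred I) (F : I -> C) :
  nrm (\sum_(i | P i) F i) <= \sum_(i | P i) nrm (F i).
Proof.
rewrite -lecR -normcE' rmorph_sum /=; apply: (le_trans (ler_norm_sum _ _ _)).
by apply: ler_sum => i _; rewrite normcE'.
Qed.

Lemma nrmM (x y : C) : nrm (x * y) = nrm x * nrm y.
Proof. by apply: complexI; rewrite rmorphM /= -!normcE' normrM. Qed.

Lemma nrmD (x y : C) : nrm (x + y) <= nrm x + nrm y.
Proof. by rewrite -lecR rmorphD /= -!normcE' ler_normD. Qed.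

Lemma nrmB (x y : C) : nrm (x - y) <= nrm x + nrm y.
Proof. by rewrite -lecR rmorphD /= -!normcE' ler_normB. Qed.

Lemma nrmN (x : C) : nrm (- x) = nrm x.
Proof. by rewrite /nrm normrN. Qed.

Lemma char_poly_horner n (B : 'M[C]_n) (s : C) : (char_poly B).[s] = \det (s%:M - B).
Proof.
rewrite /char_poly -[_.[s]]/(horner_eval s _) -det_map_mx; congr (\det _).
apply/matrixP => i j; rewrite !mxE /horner_eval /=.
by rewrite /horner_eval hornerD hornerN hornerMn hornerX hornerC.
Qed.

Lemma spec_rad_bound n (B : 'M[C]_n) :
  0 <= spec_rad B /\ spec_rad B \is Num.real /\
  forall z, z \in sval (closed_field_poly_normal (char_poly B)) -> `|z| <= spec_rad B.
Proof.
rewrite /spec_rad; elim: (sval _) => [|z s [IH0 [IHr IH]]].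
  by rewrite big_nil lexx real0.
rewrite big_cons.
have zr : `|z| \is Num.real by exact: normr_real.
rewrite /Order.max; case: ifP => lt.
  split; first by []. split; first by [].
  move=> y; rewrite in_cons => /orP [/eqP ->|ys]; [exact: ltW|exact: IH].
split; first exact: normr_ge0. split; first by [].
have le : (\big[Num.max/0]_(j <- s) `|j|) <= `|z| by rewrite real_leNgt ?lt.
move=> y; rewrite in_cons => /orP [/eqP ->|ys]; first exact: lexx.
exact: le_trans (IH y ys) le.
Qed.

Lemma prod_lower (s c : C) (rs : seq C) : 0 <= c -> (forall z, z \in rs -> c <= `|s - z|) ->
  c ^+ size rs <= \prod_(z <- rs) `|s - z|.
Proof.
move=> c0; elim: rs => [|z rs IH] H; first by rewrite big_nil expr0.
rewrite big_cons exprS /=; apply: ler_pM => //; first exact: exprn_ge0.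
- by apply: H; rewrite mem_head.
- by apply: IH => y yrs; apply: H; rewrite in_cons yrs orbT.
Qed.

Lemma H_to_pos n (A : 'M[C]_n) : is_Hmatrix A ->
  exists u : 'cV[R]_n, (forall i, 0 < u i 0) /\
    forall i, nrm (A i i) * u i 0 - \sum_(j | j != i) nrm (A i j) * u j 0 = 1.
Proof.
case=> Hreal [al [alr [Hnn Hrho]]].
set B := al%:M - cmp_mx A.
have [rho0 [rhor rhole]] := spec_rad_bound B.
set a := complex.Re al; set r := complex.Re (spec_rad B).
have alE : al = a%:C by rewrite /a RRe_real.
have rhoE : spec_rad B = r%:C by rewrite /r RRe_real.
have ar : r < a by rewrite -ltcR -alE -rhoE.
have r0 : 0 <= r by rewrite -ler0c -rhoE.
set G : 'M[R]_n := \matrix_(i, j) if i == j then nrm (A i i) else - nrm (A i j).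
have GE : map_mx (real_complex R) G = cmp_mx A.
  apply/matrixP => i j; rewrite !mxE; case: eqP => [->|_]; by rewrite ?rmorphN /= -normcE'.
have [u [u0 Gu]] : exists u : 'cV[R]_n, (forall i, 0 < u i 0) /\ G *m u = (const_mx 1 : 'cV[R]_n).
  apply: (@Zpos _ _ G ((a - r) ^+ n)).
  - by apply: exprn_gt0; rewrite subr_gt0.
  - by move=> i j ij; rewrite mxE (negbTE ij) oppr_le0 nrm_ge0.
  move=> t t0; rewrite -lecR -normC_real -(det_map_mx (real_complex R)) map_mxD map_scalar_mx GE /=.
  set s := (t + a)%:C.
  have -> : (t%:C)%:M + cmp_mx A = s%:M - B.
    by rewrite /B opprB addrA /s rmorphD /= alE raddfD /= addrAC addrK.
  rewrite -char_poly_horner.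
  have E := svalP (closed_field_poly_normal (char_poly B)).
  move: E; set rs := sval _ => E.
  have hsz : size rs = n.
    have := size_char_poly B; rewrite E (monicP (char_poly_monic B)) scale1r size_prod_XsubC.
    by case.
  rewrite E (monicP (char_poly_monic B)) scale1r horner_prod.
  rewrite (eq_bigr (fun z => s - z)); last by move=> z _; rewrite hornerXsubC.
  rewrite normr_prod rmorphXn rmorphB /= -hsz; apply: prod_lower.
    by rewrite -rmorphB /= ler0c subr_ge0 ltW.
  move=> z zrs; apply: le_trans (lerB_dist _ _).
  have := rhole z zrs; rewrite rhoE normcE' /s normC_real ger0_norm; last first.
    by apply: addr_ge0 => //; apply: le_trans r0 (ltW ar).
  move=> hz; have h2 : (a - r)%:C <= (t + a - nrm z)%:C :> C.
    by rewrite lecR in hz; rewrite lecR -addrA ler_wpDl // lerD2l lerN2.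
  by move: h2; rewrite !rmorphB.
exists u; split => // i.
have := congr1 (fun X : 'cV[R]_n => X i 0) Gu; rewrite !mxE => <-.
rewrite [RHS](bigD1 i) //= /G mxE eqxx; congr (_ + _).
rewrite -sumrN; apply: eq_bigr => j ji; by rewrite mxE eq_sym (negbTE ji) mulNr.
Qed.

End Transfer.

Section Blocks2.
Variables (R : realType) (n m : nat) (blk : 'I_n -> 'I_m).
Local Notation C := (R[i]).
Local Notation idx := (@bidx n m blk _).

Lemma blk_bidx s (a : 'I_#|blkset blk s|) : blk (idx a) = s.
Proof. by have := enum_valP a; rewrite /bidx inE => /eqP. Qed.

Lemma reindex (V : nmodType) (F : 'I_n -> V) :
  \sum_j F j = \sum_q \sum_(c < #|blkset blk q|) F (idx c).
Proof.
rewrite (partition_big blk predT) //=; apply: eq_bigr => q _.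
rewrite -big_enum_val; apply: eq_bigl => j; by rewrite inE.
Qed.

Lemma bvec_mul (A : 'M[C]_n) v s :
  bvec blk (A *m v) s = \sum_q subblock blk A s q *m bvec blk v q.
Proof.
apply/matrixP => a z; rewrite ord1 !mxE summxE reindex; apply: eq_bigr => q _.
by rewrite !mxE; apply: eq_bigr => c _; rewrite !mxE.
Qed.

Lemma bvecB (x y : 'cV[C]_n) s : bvec blk (x - y) s = bvec blk x s - bvec blk y s.
Proof. by apply/matrixP => a z; rewrite !mxE. Qed.

Lemma bvecE (x : 'cV[C]_n) s a : bvec blk x s a 0 = x (idx a) 0.
Proof. by rewrite mxE. Qed.

Lemma contract (M A : 'M[C]_n) (u : 'I_n -> R) (gam E : R) s
  (z : 'cV[C]_(#|blkset blk s|)) (w : forall q, 'cV[C]_(#|blkset blk q|)) :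
  block_diagonal blk M ->
  (forall i j, nrm (A i j) = if i == j then nrm (M i i) - nrm (M i i - A i i)
                             else nrm (M i j) + nrm (M i j - A i j)) ->
  (forall i, 0 < u i) ->
  (forall i, nrm (A i i) * u i - \sum_(j | j != i) nrm (A i j) * u j = 1) ->
  (forall i, (\sum_j nrm (M i j - A i j) * u j) / (1 + \sum_j nrm (M i j - A i j) * u j) <= gam) ->
  0 <= E ->
  (forall q (c : 'I_#|blkset blk q|), nrm (w q c 0) <= E * u (idx c)) ->
  subblock blk M s s *m z = subblock blk M s s *m w s - \sum_q subblock blk A s q *m w q ->
  forall a, nrm (z a 0) <= gam * E * u (idx a).
Proof.
move=> Mbd hMA u0 g1 hgam E0 hw heq a.
have [a0 Ha0] := ex_argmax a (fun c => nrm (z c 0) / u (idx c)).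
set zeta := nrm (z a0 0) / u (idx a0).
set i := idx a0.
have zeta0 : 0 <= zeta by apply: divr_ge0; [exact: nrm_ge0|exact: ltW].
have hz : forall c, nrm (z c 0) <= zeta * u (idx c).
  by move=> c; rewrite -ler_pdivrMr //; exact: Ha0.
suff Hz : zeta <= gam * E.
  apply: le_trans (hz a) _; apply: ler_wpM2r; [exact: ltW|exact: Hz].
have Mz : forall q (c : 'I_#|blkset blk q|), q != s -> M i (idx c) = 0.
  move=> q c qs; apply: Mbd; rewrite /i !blk_bidx eq_sym; exact: qs.
set S := \sum_j nrm (M i j - A i j) * u j.
set Mf := \sum_j nrm (M i j) * u j.
have S0 : 0 <= S by apply: sumr_ge0 => j _; apply: mulr_ge0; [exact: nrm_ge0|exact: ltW].
have row := congr1 (fun X : 'cV[C]_(#|blkset blk s|) => X a0 0) heq.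
move: row => /=.
rewrite !mxE summxE.
set T := \sum_q \sum_(c < #|blkset blk q|) (M i (idx c) - A i (idx c)) * w q c 0.
have RT : T = \sum_j subblock blk M s s a0 j * w s j 0 -
          \sum_q (subblock blk A s q *m w q) a0 0.
  rewrite /T.
  under eq_bigr => q _ do (under eq_bigr => c _ do rewrite mulrBl; rewrite sumrB).
  rewrite sumrB; congr (_ - _).
    rewrite (bigD1 s) //= [X in _ + X]big1 ?addr0; first by apply: eq_bigr => c _; rewrite mxE.
    by move=> q qs; apply: big1 => c _; rewrite Mz // mul0r.
  by apply: eq_bigr => q _; rewrite mxE; apply: eq_bigr => c _; rewrite mxE.
rewrite -RT (bigD1 a0) //= mxE -/i => row.
have nT : nrm T <= E * S.
  apply: (le_trans (nrm_sum _ _)).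
  have -> : E * S = \sum_q \sum_(c < #|blkset blk q|) E * (nrm (M i (idx c) - A i (idx c)) * u (idx c)).
    rewrite /S (reindex (fun j => nrm (M i j - A i j) * u j)) mulr_sumr.
    by apply: eq_bigr => q _; rewrite mulr_sumr.
  apply: ler_sum => q _; apply: (le_trans (nrm_sum _ _)); apply: ler_sum => c _.
  rewrite nrmM mulrCA; apply: ler_wpM2l; first exact: nrm_ge0.
  exact: hw.
have nO : nrm (\sum_(c | c != a0) subblock blk M s s a0 c * z c 0) <= zeta * (Mf - nrm (M i i) * u i).
  apply: le_trans (nrm_sum _ _) _.
  have -> : Mf - nrm (M i i) * u i = \sum_(c | c != a0) nrm (M i (idx c)) * u (idx c).
    rewrite /Mf (reindex (fun j => nrm (M i j) * u j)) (bigD1 s) //= [X in _ + X - _]big1 ?addr0.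
      by rewrite (bigD1 a0) //= addrC addrK.
    by move=> q qs; apply: big1 => c _; rewrite Mz // /nrm normr0 /= mul0r.
  rewrite mulr_sumr; apply: ler_sum => c _; rewrite nrmM mxE mulrCA.
  by apply: ler_wpM2l; [exact: nrm_ge0|exact: hz].
have ui0 : u i != 0 by rewrite gt_eqF.
have za0 : nrm (z a0 0) = zeta * u i by rewrite /zeta divfK.
have key : nrm (M i i) * (zeta * u i) <= E * S + zeta * (Mf - nrm (M i i) * u i).
  rewrite -za0 -nrmM.
  have -> : M i i * z a0 0 = T - \sum_(c | c != a0) subblock blk M s s a0 c * z c 0.
    by rewrite -row addrK.
  apply: (le_trans (nrmB _ _)); apply: lerD => //.
have ident : 2 * (nrm (M i i) * u i) - Mf = 1 + S.
  have := g1 i; rewrite (hMA i i) eqxx mulrBl.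
  have -> : \sum_(j | j != i) nrm (A i j) * u j =
            \sum_(j | j != i) nrm (M i j) * u j + \sum_(j | j != i) nrm (M i j - A i j) * u j.
    rewrite -big_split; apply: eq_bigr => j ji /=; by rewrite (hMA i j) eq_sym (negbTE ji) mulrDl.
  rewrite /S /Mf [X in _ -> _ = _ + X](bigD1 i) //= [X in _ -> _ - X = _](bigD1 i) //=.
  move=> h; lra.
have H1 : zeta * (1 + S) <= E * S.
  rewrite -ident; move: key; rewrite mulrCA; lra.
rewrite mulrC; apply: le_trans (ler_wpM2l E0 (hgam i)).
by rewrite mulrA ler_pdivlMr ?(ltr_wpDr S0 ltr01) // -/S.
Qed.

End Blocks2.

Section Misc.
Variable R : realType.

Lemma zmod_id (V : zmodType) (P Q X Y : V) : P + (Y - X) - Q = (P - Q) - (X - Y).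
Proof. by rewrite opprB addrAC [Y - X]addrC addrA. Qed.

Lemma fin_eventually (T : finType) (P : T -> nat -> Prop) :
  (forall t, exists K, forall k, (K <= k)%N -> P t k) ->
  exists K, forall t k, (K <= k)%N -> P t k.
Proof.
move=> H.
suff [K HK] : exists K, forall t, t \in enum T -> forall k, (K <= k)%N -> P t k.
  by exists K => t k Kk; apply: HK => //; rewrite mem_enum.
elim: (enum T) => [|t l [K IH]]; first by exists 0%N.
have [Kt Ht] := H t.
exists (maxn K Kt) => t'; rewrite in_cons => /orP [/eqP ->|tl] k Kk.
  by apply: Ht; apply: leq_trans Kk; rewrite leq_maxr.
by apply: IH => //; apply: leq_trans Kk; rewrite leq_maxl.
Qed.

Lemma ex_gamma n (f g : 'I_n -> R) : (forall i, 0 <= f i < 1) -> (forall i, 0 <= g i < 1) ->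
  exists gam, [/\ 0 <= gam, gam < 1 & forall i, f i <= gam /\ g i <= gam].
Proof.
move=> Hf Hg.
suff [gam [g0 g1 H]] : exists gam, [/\ 0 <= gam, gam < 1 &
    forall i, i \in enum 'I_n -> f i <= gam /\ g i <= gam].
  by exists gam; split => // i; apply: H; rewrite mem_enum.
elim: (enum 'I_n) => [|i l [gam [g0 g1 H]]]; first by exists 0; split.
have /andP [f0 f1] := Hf i; have /andP [h0 h1] := Hg i.
exists (Num.max gam (Num.max (f i) (g i))); split.
- by rewrite le_max g0.
- by rewrite !gt_max g1 f1 h1.
- move=> j; rewrite in_cons => /orP [/eqP ->|jl].
    by rewrite !le_max !lexx !orbT.
  by have [a b] := H j jl; rewrite !le_max a b.
Qed.

Lemma bernoulli (h : R) p : 0 <= h -> 1 + p%:R * h <= (1 + h) ^+ p.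
Proof.
move=> h0; elim: p => [|p IH]; first by rewrite mul0r addr0 expr0.
rewrite exprS -natr1 mulrDl mul1r.
apply: le_trans (_ : (1 + h) * (1 + p%:R * h) <= _); last first.
  by apply: ler_wpM2l => //; apply: addr_ge0.
have : 0 <= p%:R * h * h by apply: mulr_ge0 => //; apply: mulr_ge0.
move=> H; rewrite mulrDl mul1r mulrDr mulr1; lra.
Qed.

Lemma pow_small (gam B eps : R) : 0 <= gam -> gam < 1 -> 0 <= B -> 0 < eps ->
  exists p, gam ^+ p * B < eps.
Proof.
move=> g0 g1 B0 e0.
case: (eqVneq gam 0) => [->|gn0]; first by exists 1%N; rewrite expr1 mul0r.
have gp : 0 < gam by rewrite lt_def gn0 g0.
set h := gam^-1 - 1.
have hp : 0 < h by rewrite subr_gt0 invf_gt1.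
have [p Hp] : exists p : nat, B / (eps * h) < p%:R.
  exists (Num.Def.archi_bound (B / (eps * h))); apply: archi_boundP.
  by apply: divr_ge0 => //; apply: mulr_ge0; apply: ltW.
exists p.
have pos : 0 < (1 + h) ^+ p by apply: exprn_gt0; apply: addr_gt0.
have E : gam ^+ p = ((1 + h) ^+ p)^-1.
  by rewrite -exprVn /h addrC subrK invrK.
rewrite E mulrC ltr_pdivrMr //.
rewrite ltr_pdivrMr ?mulr_gt0 // in Hp.
apply: lt_le_trans (ler_wpM2l (ltW e0) (bernoulli p (ltW hp))).
rewrite mulrDr mulr1 mulrCA; lra.
Qed.

End Misc.

Section MainLemmas.
Variable R : realType.
Local Open Scope complex_scope.

Lemma sum_ge_term (I : finType) (F : I -> R) i : (forall j, 0 <= F j) -> F i <= \sum_j F j.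
Proof. by move=> F0; rewrite (bigD1 i) //= lerDl; apply: sumr_ge0. Qed.

Lemma frac_lt1 (S : R) : 0 <= S -> 0 <= S / (1 + S) < 1.
Proof.
move=> S0; have p : 0 < 1 + S by apply: ltr_wpDr => //; exact: ltr01.
rewrite divr_ge0 ?(ltW p) //= ltr_pdivrMr // mul1r ltrDr ltr01 //.
Qed.

Lemma split_hyp n (M A : 'M[R[i]]_n) : cmp_mx M - mabs (M - A) = cmp_mx A ->
  forall i j, nrm (A i j) = if i == j then nrm (M i i) - nrm (M i i - A i i)
                             else nrm (M i j) + nrm (M i j - A i j).
Proof.
move/matrixP => H i j; have := H i j; rewrite !mxE; case: eqP => [->|_]; rewrite !normcE' => h.
  by apply: complexI; rewrite rmorphB /= h.
by apply: complexI; apply: oppr_inj; rewrite rmorphD /= -h opprD.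
Qed.

Lemma nrm_eq0 (z : R[i]) : nrm z <= 0 -> z = 0.
Proof.
move=> h; have : nrm z = 0 by apply/eqP; rewrite eq_le h nrm_ge0.
by move=> h0; apply/eqP; rewrite -normr_eq0 normcE' h0.
Qed.

Lemma from_blocks n m (blk : 'I_n -> 'I_m) (P : 'I_n -> Prop) :
  (forall s (a : 'I_#|blkset blk s|), P (bidx a)) -> forall j, P j.
Proof.
move=> H j; have Hj : j \in blkset blk (blk j) by rewrite inE.
by have := H (blk j) (enum_rank_in Hj j); rewrite /bidx enum_rankK_in.
Qed.

Lemma bvec0 n m (blk : 'I_n -> 'I_m) s : bvec blk (0 : 'cV[R[i]]_n) s = 0.
Proof. by apply/matrixP => a z; rewrite !mxE. Qed.

End MainLemmas.

Unset Implicit Arguments.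
Local Open Scope complex_scope.

Theorem corollary2 (R : realType) (n m : nat) (blk : 'I_n -> 'I_m)
  (A M F : 'M[R[i]]_n) (b : 'cV[R[i]]_n)
  (Omega : nat -> {set 'I_m}) (delta : 'I_m -> 'I_m -> nat -> nat)
  (x y : nat -> 'cV[R[i]]_n) :
  consecutive_blocks blk ->
  M \in unitmx -> F \in unitmx ->
  block_diagonal blk M -> block_diagonal blk F ->
  (forall s, subblock blk M s s \in unitmx) ->
  (forall s, subblock blk F s s \in unitmx) ->
  (forall s K, exists k, (K <= k)%N /\ s \in Omega k) ->
  (forall s q k, (delta s q k <= k)%N) ->
  (forall s q N, exists K, forall k, (K <= k)%N -> (N <= delta s q k)%N) ->
  (forall k s,
     bvec blk (y k) s =
       bvec blk (x (delta s s k)) s +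
       invmx (subblock blk M s s) *m
         (bvec blk b s - \sum_q subblock blk A s q *m bvec blk (x (delta s q k)) q)) ->
  (forall k s,
     bvec blk (x k.+1) s =
       if s \in Omega k then
         bvec blk (y (delta s s k)) s +
         invmx (subblock blk F s s) *m
           (bvec blk b s - \sum_q subblock blk A s q *m bvec blk (y (delta s q k)) q)
       else bvec blk (x k) s) ->
  is_Hmatrix A ->
  cmp_mx M - mabs (M - A) = cmp_mx A ->
  cmp_mx F - mabs (F - A) = cmp_mx A ->
  exists xs : 'cV[R[i]]_n, A *m xs = b /\
    forall eps : R, 0 < eps ->
      exists K, forall k, (K <= k)%N -> forall j, `|x k j 0 - xs j 0| < (eps%:C)%C.
Proof.
move=> Hcons HMu HFu HMbd HFbd HMs HFs HOm Hdle Hdlim Hy Hx HA HM HF.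
have [u [u0 g1]] := H_to_pos HA.
pose uf := fun j => u j 0.
have uf0 : forall j, 0 < uf j := u0.
have hMA := split_hyp HM. have hFA := split_hyp HF.
pose SM := fun i => \sum_j nrm (M i j - A i j) * uf j.
pose SF := fun i => \sum_j nrm (F i j - A i j) * uf j.
have SM0 : forall i, 0 <= SM i by move=> i; apply: sumr_ge0 => j _; apply: mulr_ge0; [exact: nrm_ge0|exact: ltW].
have SF0 : forall i, 0 <= SF i by move=> i; apply: sumr_ge0 => j _; apply: mulr_ge0; [exact: nrm_ge0|exact: ltW].
have [gam [gam0 gam1 Hgam]] := ex_gamma (fun i => frac_lt1 (SM0 i)) (fun i => frac_lt1 (SF0 i)).
have contrM := fun s z w E => @contract R n m blk M A uf gam E s z w HMbd hMA uf0 g1 (fun i => (Hgam i).1).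
have contrF := fun s z w E => @contract R n m blk F A uf gam E s z w HFbd hFA uf0 g1 (fun i => (Hgam i).2).
have Ainj : forall v : 'cV[R[i]]_n, A *m v = 0 -> v = 0.
  move=> v Av; apply/matrixP => j k; rewrite ord1 mxE.
  have [j0 Hj0] := ex_argmax j (fun j => nrm (v j 0) / uf j).
  set E := nrm (v j0 0) / uf j0.
  have E0 : 0 <= E by apply: divr_ge0; [exact: nrm_ge0|exact: ltW].
  have hv : forall j, nrm (v j 0) <= E * uf j.
    by move=> j'; rewrite -ler_pdivrMr //; exact: Hj0.
  have hv2 : forall j, nrm (v j 0) <= gam * E * uf j.
    apply: (from_blocks (blk := blk)) => s a; rewrite -bvecE.
    apply: (contrM s (bvec blk v s) (fun q => bvec blk v q) E) => //.
      by move=> q c; rewrite bvecE; exact: hv.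
    by rewrite -bvec_mul Av bvec0 subr0.
  have : E * uf j0 <= gam * E * uf j0 by rewrite /E divfK ?gt_eqF //; exact: hv2.
  rewrite ler_pM2r // => h.
  have EE : E <= 0.
    have : (1 - gam) * E <= 0 by rewrite mulrBl mul1r subr_le0.
    by rewrite pmulr_rle0 // subr_gt0.
  have := hv j; have -> : E = 0 by apply/eqP; rewrite eq_le EE E0.
  rewrite mul0r => /nrm_eq0 ->; by [].
have Aunit : A \in unitmx.
  rewrite unitmxE unitfE; apply/negP; rewrite -det_tr => /det0P [v vn0 vA].
  have := congr1 trmx vA; rewrite trmx_mul trmxK trmx0 => /Ainj /(congr1 trmx).
  by rewrite trmxK trmx0 => v0; rewrite v0 eqxx in vn0.
pose xs := invmx A *m b.
have Axs : A *m xs = b by rewrite mulmxA mulmxV // mul1mx.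
exists xs; split => //.
pose e := fun k => x k - xs.
pose f := fun k => y k - xs.
have bb : forall s, bvec blk b s = \sum_q subblock blk A s q *m bvec blk xs q.
  by move=> s; rewrite -Axs bvec_mul.
have EqY : forall k s, subblock blk M s s *m bvec blk (f k) s =
    subblock blk M s s *m bvec blk (e (delta s s k)) s -
    \sum_q subblock blk A s q *m bvec blk (e (delta s q k)) q.
  move=> k s; rewrite /f /e !bvecB Hy bb.
  under [in RHS]eq_bigr => q _ do rewrite bvecB mulmxBr.
  rewrite sumrB mulmxBr mulmxDr mulmxA mulmxV // mul1mx mulmxBr.
  exact: zmod_id.
have EqX : forall k s, s \in Omega k -> subblock blk F s s *m bvec blk (e k.+1) s =
    subblock blk F s s *m bvec blk (f (delta s s k)) s -
    \sum_q subblock blk A s q *m bvec blk (f (delta s q k)) q.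
  move=> k s Hs; rewrite /f /e !bvecB Hx Hs bb.
  under [in RHS]eq_bigr => q _ do rewrite bvecB mulmxBr.
  rewrite sumrB mulmxBr mulmxDr mulmxA mulmxV // mul1mx mulmxBr.
  exact: zmod_id.
have EqN : forall k s, s \notin Omega k -> bvec blk (e k.+1) s = bvec blk (e k) s.
  by move=> k s Hs; rewrite /e !bvecB Hx (negbTE Hs).
pose Bx := fun (E : R) k => forall j, nrm (e k j 0) <= E * uf j.
pose By := fun (E : R) k => forall j, nrm (f k j 0) <= E * uf j.
have gE : forall E : R, 0 <= E -> gam * E <= E.
  by move=> E E0; apply: ler_piMl => //; exact: ltW.
have wkn : forall (E1 E2 : R) j, E1 <= E2 -> E1 * uf j <= E2 * uf j.
  by move=> E1 E2 j h; apply: ler_wpM2r => //; exact: ltW.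
have stepY : forall E k, 0 <= E -> (forall s q, Bx E (delta s q k)) -> By (gam * E) k.
  move=> E k E0 H; apply: (from_blocks (blk := blk)) => s a; rewrite -bvecE.
  apply: (contrM s (bvec blk (f k) s) (fun q => bvec blk (e (delta s q k)) q) E) => //.
    by move=> q c; rewrite bvecE; exact: H.
have stepX : forall E k s, 0 <= E -> s \in Omega k -> (forall q, By E (delta s q k)) ->
    forall a : 'I_#|blkset blk s|, nrm (e k.+1 (bidx a) 0) <= gam * E * uf (bidx a).
  move=> E k s E0 Hs H a; rewrite -bvecE.
  apply: (contrF s (bvec blk (e k.+1) s) (fun q => bvec blk (f (delta s q k)) q) E) => //.
    by move=> q c; rewrite bvecE; exact: H.
  exact: EqX.
pose E0 := \sum_j nrm (e 0%N j 0) / uf j.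
have E00 : 0 <= E0.
  by apply: sumr_ge0 => j _; apply: divr_ge0; [exact: nrm_ge0|exact: ltW].
have unif : forall k k', (k' <= k)%N -> Bx E0 k'.
  elim=> [|k IH] k' hk'.
    move: hk'; rewrite leqn0 => /eqP -> j; rewrite -ler_pdivrMr //.
    apply: (@sum_ge_term R _ (fun j => nrm (e 0%N j 0) / uf j) j) => j'.
    by apply: divr_ge0; [exact: nrm_ge0|exact: ltW].
  move: hk'; rewrite leq_eqVlt => /orP [/eqP ->|hk']; last exact: IH.
  apply: (from_blocks (blk := blk)) => s a.
  case: (boolP (s \in Omega k)) => Hs.
    apply: le_trans (stepX E0 k s E00 Hs _ a) (wkn _ _ _ (gE _ E00)).
    move=> q j; apply: le_trans (wkn _ _ _ (gE _ E00)).
    apply: stepY => // s' q'; apply: IH.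
    by apply: leq_trans (Hdle _ _ _) (Hdle _ _ _).
  by rewrite -bvecE EqN // bvecE; apply: IH.
have level : forall p, exists K, forall k, (K <= k)%N -> Bx (gam ^+ p * E0) k.
  elim=> [|p [K HK]].
    by exists 0%N => k _; rewrite expr0 mul1r; apply: (unif k).
  set Ep := gam ^+ p * E0.
  have Ep0 : 0 <= Ep by apply: mulr_ge0 => //; exact: exprn_ge0.
  have [K1 HK1] := fin_eventually (fun st : 'I_m * 'I_m => Hdlim st.1 st.2 K).
  have HY : forall k, (K1 <= k)%N -> By (gam * Ep) k.
    move=> k hk; apply: stepY => // s q; apply: HK.
    exact: (HK1 (s, q) k hk).
  have [K2 HK2] := fin_eventually (fun st : 'I_m * 'I_m => Hdlim st.1 st.2 K1).
  have blockwise : forall s, exists Ks, forall k, (Ks <= k)%N ->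
      forall a : 'I_#|blkset blk s|, nrm (e k (bidx a) 0) <= gam * Ep * uf (bidx a).
    move=> s; have [ks [Hks Om]] := HOm s K2; exists ks.+1.
    suff H : forall d (a : 'I_#|blkset blk s|), nrm (e (ks + d).+1 (bidx a) 0) <= gam * Ep * uf (bidx a).
      by move=> k hk a; have := H (k - ks.+1)%N a; rewrite -addSn subnKC.
    have upd : forall k, (K2 <= k)%N -> s \in Omega k ->
        forall a : 'I_#|blkset blk s|, nrm (e k.+1 (bidx a) 0) <= gam * Ep * uf (bidx a).
      move=> k hk Hs a; apply: le_trans (stepX (gam * Ep) k s _ Hs _ a) (wkn _ _ _ (gE _ _)).
      - by apply: mulr_ge0.
      - move=> q; apply: HY; exact: (HK2 (s, q) k hk).
      - by apply: mulr_ge0.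
    elim=> [|d IHd] a; first by rewrite addn0; exact: upd.
    have hk : (K2 <= (ks + d).+1)%N by apply: leq_trans Hks _; rewrite leqW // leq_addr.
    case: (boolP (s \in Omega (ks + d).+1)) => Hs; first by rewrite addnS; exact: upd.
    by rewrite addnS -bvecE EqN // bvecE; exact: IHd.
  have [K3 HK3] := fin_eventually blockwise.
  exists K3 => k hk; apply: (from_blocks (blk := blk)) => s a.
  by rewrite exprS -mulrA; exact: HK3.
move=> eps eps0.
pose U := \sum_j uf j.
have U0 : 0 <= U by apply: sumr_ge0 => j _; exact: ltW.
have [p Hp] := pow_small gam0 gam1 (mulr_ge0 E00 U0) eps0.
have [K HK] := level p.
exists K => k hk j.
have := HK k hk j; rewrite /e !mxE => H.
rewrite normcE' ltcR.
apply: le_lt_trans H _; apply: le_lt_trans Hp.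
rewrite -mulrA; apply: ler_wpM2l; first exact: exprn_ge0.
apply: ler_wpM2l => //; exact: (@sum_ge_term R _ uf j (fun j => ltW (uf0 j))).
Qed.
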